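(* Let $\Omega$ be a finite nonempty set, $\mathcal{A}=2^\Omega$, let $\phi$ be a coevent on $\mathcal{A}$ and let $\mu$ be a $q$-measure on $\mathcal{A}$. If $\mu$ 1-generates $\phi$ and $\mu(\Omega)\neq 0$, then $\mu$ actualizes $\phi$.
   Context: Let $\Omega$ be a finite nonempty set and $\mathcal{A}=2^\Omega$. A coevent is a map $\phi:\mathcal{A}\to\{0,1\}$ with $\phi(\emptyset)=0$. For $f:\Omega\to[0,\infty)$ and a coevent $\phi$, the $q$-integral is $\int f\,d\phi=\int_0^\infty \phi(\{\omega\in\Omega: f(\omega)>\lambda\})\,d\lambda$ (Lebesgue measure in $\lambda$), and for $A\in\mathcal{A}$, $\int_A f\,d\phi=\int f\chi_A\,d\phi$ where $\chi_A$ is the indicator function of $A$. A $q$-measure is a map $\mu:\mathcal{A}\to[0,\infty)$ such that for all pairwise disjoint $A,B,C\in\mathcal{A}$: $\mu(A\cup B\cup C)=\mu(A\cup B)+\mu(A\cup C)+\mu(B\cup C)-\mu(A)-\mu(B)-\mu(C)$. The $q$-measure $\mu$ 1-generates $\phi$ if there is a function $f:\Omega\to(0,\infty)$ with $\mu(A)=\int_A f\,d\phi$ for all $A\in\mathcal{A}$. The $q$-measure $\mu$ actualizes $\phi$ if there is a symmetric function $f:\Omega\times\Omega\to(0,\infty)$ (i.e. $f(\omega,\omega')=f(\omega',\omega)$) such that for all $A\in\mathcal{A}$, $\mu(A)=\int g_A\,d\phi$, where $g_A:\Omega\to[0,\infty)$ is defined by $g_A(\omega')=\int_A f(\cdot,\omega')\,d\phi$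 (the $q$-integral over $A$ of $\omega\mapsto f(\omega,\omega')$). *)

(* Defs.v *)
From mathcomp Require Import all_boot.
From Stdlib Require Import Reals.
Set Implicit Arguments. Unset Strict Implicit.

Local Open Scope R_scope.

(* A coevent phi : 2^Omega -> {0,1} is represented as a boolean-valued
   map on {set Omega} with phi set0 = false; its real value is coev_val. *)
Definition coevent (Omega : finType) (phi : {set Omega} -> bool) : Prop :=
  phi set0 = false.

Definition coev_val (Omega : finType) (phi : {set Omega} -> bool)
  (A : {set Omega}) : R := if phi A then 1 else 0.

Definition chi (Omega : finType) (A : {set Omega}) (w : Omega) : R :=
  if w \in A then 1 else 0.

Definition upper_set (Omega : finType) (f : Omega -> R) (l : R) : {set Omega} :=
  [set w | if Rlt_dec l (f w) then true else false].

(* is_qint phi f r : the q-integral  int_0^oo phi({f > l}) dl  equals r.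
   Since the integrand is a step function vanishing for l >= max f, the
   Lebesgue integral over [0,oo) is the Riemann integral over [0,M] for any
   M bounding f. *)
Definition is_qint (Omega : finType) (phi : {set Omega} -> bool)
  (f : Omega -> R) (r : R) : Prop :=
  exists M : R, 0 <= M /\ (forall w, f w <= M) /\
    exists pr : Riemann_integrable
                  (fun l => coev_val phi (upper_set f l)) 0 M,
      RiemannInt pr = r.

Definition q_measure (Omega : finType) (mu : {set Omega} -> R) : Prop :=
  (forall A, 0 <= mu A) /\
  (forall A B C : {set Omega},
     A :&: B = set0 -> A :&: C = set0 -> B :&: C = set0 ->
     mu (A :|: B :|: C) =
       mu (A :|: B) + mu (A :|: C) + mu (B :|: C) - mu A - mu B - mu C).

Definition one_generates (Omega : finType) (mu : {set Omega} -> R)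
  (phi : {set Omega} -> bool) : Prop :=
  exists f : Omega -> R, (forall w, 0 < f w) /\
    forall A : {set Omega}, is_qint phi (fun w => f w * chi A w) (mu A).

Definition actualizes (Omega : finType) (mu : {set Omega} -> R)
  (phi : {set Omega} -> bool) : Prop :=
  exists f : Omega -> Omega -> R,
    (forall w w', 0 < f w w') /\ (forall w w', f w w' = f w' w) /\
    forall A : {set Omega}, exists g : Omega -> R,
      (forall w', is_qint phi (fun w => f w w' * chi A w) (g w')) /\
      is_qint phi g (mu A).

(* Main.v *)
Require Import Defs.
From Stdlib Require Import Reals Lra RList RiemannInt_SF RiemannInt Ranalysis1.
Local Open Scope list_scope.
Local Open Scope R_scope.


Section Scale.
Variable c : R.
Hypothesis cpos : 0 < c.

Lemma pos_Rl_map l i : pos_Rl (List.map (Rmult c) l) i = c * pos_Rl l i.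
Proof. revert i; induction l as [|x l IH]; intros [|i]; simpl; try ring; auto. Qed.

Lemma Int_SF_map lf : forall l, Int_SF lf (List.map (Rmult c) l) = c * Int_SF lf l.
Proof.
  induction lf as [|a lf IH]; intros l; simpl. ring.
  destruct l as [|x [|y l]]; simpl; try ring.
  specialize (IH (y :: l)). simpl in IH. rewrite IH. ring.
Qed.

Lemma scale_adapted f a b l lf : a <= b -> adapted_couple f a b l lf ->
  adapted_couple (fun t => f (t / c)) (c * a) (c * b) (List.map (Rmult c) l) lf.
Proof.
  intros Hab [Ho [H0 [H1 [Hlen Hc]]]].
  assert (Hcab : c * a <= c * b) by (apply Rmult_le_compat_l; lra).
  rewrite Rmin_left in H0 by lra. rewrite Rmax_right in H1 by lra.
  unfold adapted_couple. rewrite Rmin_left by lra. rewrite Rmax_right by lra.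
  rewrite List.length_map. split; [|split; [|split; [|split]]].
  - intros i Hi. rewrite List.length_map in Hi. rewrite !pos_Rl_map.
    apply Rmult_le_compat_l; [lra|]. apply Ho; auto.
  - rewrite pos_Rl_map, H0; ring.
  - rewrite pos_Rl_map, H1; ring.
  - exact Hlen.
  - intros i Hi x [Hx1 Hx2]. rewrite !pos_Rl_map in Hx1, Hx2.
    apply (Hc i Hi). split.
    + apply Rmult_lt_reg_l with c; auto. replace (c * (x / c)) with x by (field; lra). exact Hx1.
    + apply Rmult_lt_reg_l with c; auto. replace (c * (x / c)) with x by (field; lra). exact Hx2.
Qed.

Definition scaleSF a b (Hab : a <= b) (phi : StepFun a b) : StepFun (c * a) (c * b) :=
  mkStepFun (existT _ (List.map (Rmult c) (subdivision phi))
     (existT _ (subdivision_val phi) (@scale_adapted phi a b _ _ Hab (StepFun_P1 phi)))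
     : IsStepFun (fun t => phi (t / c)) (c * a) (c * b)).

Arguments scaleSF {a b} Hab phi.
Lemma RiemannInt_SF_scale a b (Hab : a <= b) (phi : StepFun a b) :
  RiemannInt_SF (scaleSF Hab phi) = c * RiemannInt_SF phi.
Proof.
  assert (Hcab : c * a <= c * b) by (apply Rmult_le_compat_l; lra).
  unfold RiemannInt_SF.
  destruct (Rle_dec (c * a) (c * b)); [|lra].
  destruct (Rle_dec a b); [|lra].
  unfold subdivision_val, subdivision. simpl.
  fold (subdivision phi). rewrite Int_SF_map.
  unfold subdivision, subdivision_val. destruct (pre phi) as [l [lf H]]. simpl. reflexivity.
Qed.

Definition pd (eps : posreal) : posreal :=
  mkposreal (eps / c) (Rdiv_lt_0_compat _ _ (cond_pos eps) cpos).

Lemma scale_prop f a b (Hab : a <= b) (eps : posreal) (phi psi : StepFun a b) :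
  (forall t, Rmin a b <= t <= Rmax a b -> Rabs (f t - phi t) <= psi t) /\
  Rabs (RiemannInt_SF psi) < pd eps ->
  (forall t, Rmin (c * a) (c * b) <= t <= Rmax (c * a) (c * b) ->
     Rabs (f (t / c) - scaleSF Hab phi t) <= scaleSF Hab psi t) /\
  Rabs (RiemannInt_SF (scaleSF Hab psi)) < eps.
Proof.
  intros [H1 H2].
  assert (Hcab : c * a <= c * b) by (apply Rmult_le_compat_l; lra).
  split.
  - intros t Ht. rewrite Rmin_left, Rmax_right in Ht by lra. simpl.
    apply H1. rewrite Rmin_left, Rmax_right by lra. split.
    + apply Rmult_le_reg_l with c; auto. replace (c * (t / c)) with t by (field; lra). lra.
    + apply Rmult_le_reg_l with c; auto. replace (c * (t / c)) with t by (field; lra). lra.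
  - rewrite RiemannInt_SF_scale, Rabs_mult, Rabs_pos_eq by lra.
    simpl in H2. apply Rmult_lt_reg_l with (/ c). apply Rinv_0_lt_compat; lra.
    replace (/ c * (c * Rabs (RiemannInt_SF psi))) with (Rabs (RiemannInt_SF psi)) by (field; lra).
    replace (/ c * eps) with (eps / c) by (field; lra). exact H2.
Qed.

Arguments scale_prop {f a b} Hab eps {phi psi}.
Definition scale_integ f a b (Hab : a <= b) (pr : Riemann_integrable f a b) :
  Riemann_integrable (fun t => f (t / c)) (c * a) (c * b) :=
  fun eps => existT _ (scaleSF Hab (projT1 (pr (pd eps))))
    (exist _ (scaleSF Hab (proj1_sig (projT2 (pr (pd eps)))))
       (scale_prop Hab eps (proj2_sig (projT2 (pr (pd eps)))))).

Arguments scale_integ {f a b} Hab pr.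
Lemma RiemannInt_scale f a b (Hab : a <= b) (pr : Riemann_integrable f a b) :
  RiemannInt (scale_integ Hab pr) = c * RiemannInt pr.
Proof.
  unfold RiemannInt.
  destruct (RiemannInt_exists pr RinvN RinvN_cv) as [l Hl].
  destruct (RiemannInt_exists (scale_integ Hab pr) RinvN RinvN_cv) as [l' Hl'].
  assert (Hcv : Un_cv (fun n => pd (RinvN n)) 0).
  { intros e He. assert (Hec : e * c > 0) by nra. destruct (RinvN_cv Hec) as [N HN].
    exists N; intros n Hn. specialize (HN n Hn). unfold Rdist in *. cbv beta in *. change (pos (pd (RinvN n))) with (RinvN n / c).
    rewrite Rminus_0_r in *. rewrite Rabs_pos_eq in HN by (left; apply cond_pos).
    rewrite Rabs_pos_eq. apply Rmult_lt_reg_l with c; auto.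
    replace (c * (RinvN n / c)) with (pos (RinvN n)) by (field; lra). nra.
    left; apply Rdiv_lt_0_compat; [apply cond_pos| lra]. }
  pose proof (@RiemannInt_P4 f a b l pr pr RinvN (fun n => pd (RinvN n)) RinvN_cv Hcv Hl) as Hv.
  assert (Hv' : Un_cv (fun N => RiemannInt_SF (phi_sequence RinvN (scale_integ Hab pr) N)) (c * l)).
  { intros e He. assert (Hec : e / c > 0) by (apply Rdiv_lt_0_compat; lra). destruct (Hv _ Hec) as [N HN].
    exists N; intros n Hn. specialize (HN n Hn). unfold Rdist in *.
    cbv beta in *.
    change (phi_sequence RinvN (scale_integ Hab pr) n) with (scaleSF Hab (phi_sequence (fun n => pd (RinvN n)) pr n)).
    rewrite RiemannInt_SF_scale, <- Rmult_minus_distr_l.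
    rewrite Rabs_mult, Rabs_pos_eq by lra.
    apply Rmult_lt_reg_l with (/ c). apply Rinv_0_lt_compat; lra.
    replace (/ c * (c * Rabs (RiemannInt_SF (phi_sequence (fun n => pd (RinvN n)) pr n) - l)))
      with (Rabs (RiemannInt_SF (phi_sequence (fun n => pd (RinvN n)) pr n) - l)) by (field; lra).
    replace (/ c * e) with (e / c) by (field; lra). exact HN. }
  exact (UL_sequence _ _ _ Hl' Hv').
Qed.
End Scale.

Lemma scale_exists c (cpos : 0 < c) f a b (Hab : a <= b) (pr : Riemann_integrable f a b) a' b' :
  a' = c * a -> b' = c * b ->
  exists pr' : Riemann_integrable (fun t => f (t / c)) a' b', RiemannInt pr' = c * RiemannInt pr.
Proof. intros -> ->. exists (@scale_integ c cpos f a b Hab pr). apply RiemannInt_scale. Qed.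

From mathcomp Require Import all_boot.
From Stdlib Require Import Reals FunctionalExtensionality.
Local Open Scope R_scope.

Lemma is_qint_scale (Omega : finType) (phi : {set Omega} -> bool) (h1 h2 : Omega -> R) c r :
  0 < c -> (forall w, h2 w = c * h1 w) -> is_qint phi h1 r -> is_qint phi h2 (c * r).
Proof.
  intros cpos Hh [M [HM [Hb [pr Hpr]]]].
  exists (c * M). split; [nra|]. split.
  { intro w. rewrite Hh. specialize (Hb w). nra. }
  assert (Heq : (fun l => coev_val phi (upper_set h2 l)) =
                (fun t => (fun l => coev_val phi (upper_set h1 l)) (t / c))).
  { apply functional_extensionality. intro l. unfold coev_val.
    assert (E : upper_set h2 l = upper_set h1 (l / c)).
    { apply/setP => w. unfold upper_set. rewrite !inE Hh.
      destruct (Rlt_dec l (c * h1 w)) as [H1|H1];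
      destruct (Rlt_dec (l / c) (h1 w)) as [H2|H2]; auto; exfalso.
      - apply H2. apply Rmult_lt_reg_l with c; auto.
        replace (c * (l / c)) with l by (field; lra). exact H1.
      - apply H1. replace l with (c * (l / c)) by (field; lra).
        apply Rmult_lt_compat_l; auto. }
    rewrite E. reflexivity. }
  rewrite Heq.
  destruct (@scale_exists c cpos _ 0 M HM pr 0 (c * M)) as [pr' Hpr']; [ring|reflexivity|].
  exists pr'. rewrite Hpr' Hpr. reflexivity.
Qed.

Lemma is_qint_zero (Omega : finType) (phi : {set Omega} -> bool) (h : Omega -> R) :
  (forall w, h w = 0) -> is_qint phi h 0.
Proof.
  intros Hh. exists 0. split; [lra|]. split.
  { intro w. rewrite Hh. lra. }
  exists (RiemannInt_P7 _ 0). apply RiemannInt_P9.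
Qed.

Lemma is_qint_ext_zero (Omega : finType) (phi : {set Omega} -> bool) (h : Omega -> R) r :
  0 = r -> (forall w, h w = 0) -> is_qint phi h r.
Proof. intros <-. apply is_qint_zero. Qed.

Close Scope R_scope.
Theorem theorem3p1 (Omega : finType) (HOmega : (0 < #|Omega|)%N)
  (phi : {set Omega} -> bool) (mu : {set Omega} -> R) :
  coevent phi -> q_measure mu -> one_generates mu phi ->
  mu [set: Omega] <> 0%R -> actualizes mu phi.
Proof.
  Local Open Scope R_scope.
  intros Hco [Hmu0 _] [f [fpos Hf]] Hne.
  set m := mu [set: Omega].
  assert (mpos : 0 < m) by (destruct (Hmu0 [set: Omega]); [auto|]; unfold m in *; lra).
  exists (fun w w' => f w * f w' / m). split; [|split].
  - intros w w'. apply Rdiv_lt_0_compat; auto. apply Rmult_lt_0_compat; auto.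
  - intros w w'. unfold Rdiv. ring.
  - intro A. exists (fun w' => f w' / m * mu A). split.
    + intro w'. apply (@is_qint_scale _ phi (fun w => f w * chi A w)).
      * apply Rdiv_lt_0_compat; auto.
      * intro w. unfold Rdiv. ring.
      * apply Hf.
    + destruct (Hmu0 A) as [HA|HA].
      * replace (mu A) with (mu A / m * m) by (field; lra).
        apply (@is_qint_scale _ phi (fun w => f w * chi [set: Omega] w)).
        -- apply Rdiv_lt_0_compat; auto.
        -- intro w. unfold chi. rewrite in_setT. field. lra.
        -- apply Hf.
      * apply (@is_qint_ext_zero _ phi _ _ HA). intro w. rewrite <- HA. ring.
Qed.
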